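(* In the model described in the context, if the threshold satisfies $t<\tau+f$ (i.e. $t$ records from distinct objects suffice to create an evidence), then the a-audit cannot satisfy strong accuracy.
   Context: Model. An asynchronous system has client processes (writers, readers, auditors) and $n$ storage objects $o_1,\dots,o_n$. Each $o_k$ is a linearisable loggable read/write register with a log $L_k$. Its rw-write($b$) stores a block; rw-read() returns the current block and appends $\langle p_r,\mathit{label}(b)\rangle$ to $L_k$, where $p_r$ is the reader and $\mathit{label}(b)$ identifies the value from which $b$ was derived; rw-getLog() returns $L_k$. A multi-writer multi-reader register over values $\mathbb{V}$ is emulated by information dispersal. An a-write($v$) encodes $v$ into $b_{v_1},\dots,b_{v_n}$ with $b_{v_k}$ sent to $o_k$. Any $\tau$ distinct blocks of $v$ suffice to recover $v$, and fewer do not; $\tau>f$. Reads are fast (one round-trip). Concurrency is unlimited, and writes may remain incomplete (reaching only some objects). Faults. At most $f$ objects are faulty; a faulty object may crash, omit its block, omit log records from auditors, and report records of nonexistent reads. Providing set $P_{p_r,v}$: the set of objects that received a write of $b_{v_k}$ and responded $b_{v_k}$ to a read of $p_r$. The value $v$ is effectively read by $p_r$ iff $|P_{p_r,v}|\ge\tau$. Audit. An a-audit collects logs from an auditing quorum of $n-f$ objects and returns a set $E_A$ of evidences. An evidence $\mathcal{E}_{p_r,v}$ is created once at least $t$ records $\langle p_r,\mathit{label}(v)\rangle$ from distinct objects are collected. Strong accuracy: for every correct reader $p_r$ and every value $v$, $|P_{p_r,v}|<\tau$ before the audit implies $\mathcal{E}_{p_r,v}\notin E_A$. *)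

(* Defs.v *)
(* Abstract model of the audit scenario at the moment of an
   a-audit: storage objects are indexed by 'I_n; reader identifiers and value
   labels are natural numbers (label(v) is identified with v). *)
From mathcomp Require Import all_boot.
Set Implicit Arguments. Unset Strict Implicit. Unset Printing Implicit Defensive.

Record Exec (n : nat) := MkExec {
  faulty    : {set 'I_n};
  written   : 'I_n -> nat -> bool;       (* o_k received rw-write(b_{v_k}) *)
  responded : nat -> 'I_n -> nat -> bool;(* o_k answered b_{v_k} to a read of p *)
  rlog      : 'I_n -> seq (nat * nat);   (* actual log L_k of o_k *)
  quorum    : {set 'I_n};
  reported  : 'I_n -> seq (nat * nat)    (* log of o_k as returned to the auditor *)
}.

(* Faulty
   objects are unconstrained (omit blocks/records, report fake records). *)
Definition admissible (n f : nat) (e : Exec n) : Prop :=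
  [/\ #|faulty e| <= f,
      #|quorum e| = n - f,
      (forall k p v, k \notin faulty e -> responded e p k v -> written e k v),
      (forall k p v, k \notin faulty e -> ((p, v) \in rlog e k) = responded e p k v)
    & (forall k, k \notin faulty e -> reported e k = rlog e k)].

Definition providing_set n (e : Exec n) (p v : nat) : {set 'I_n} :=
  [set k | written e k v && responded e p k v].

Definition evidence n (t : nat) (e : Exec n) (p v : nat) : bool :=
  t <= #|[set k in quorum e | (p, v) \in reported e k]|.

Definition strong_accuracy (n f tau t : nat) : Prop :=
  forall e : Exec n, admissible f e ->
  forall p v, #|providing_set e p v| < tau -> ~~ evidence t e p v.

(* Main.v *)
Require Import Defs.
From mathcomp Require Import all_boot zify.

Lemma count_range a b n :
  count (fun k => (a <= k) && (k < b)) (iota 0 n) = minn b n - a.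
Proof.
elim: n => [|n IH]; first by rewrite /= minn0.
rewrite -addn1 iotaD count_cat IH /= addn0.
case: (leqP a n) => Ha; case: (ltnP n b) => Hb /=; lia.
Qed.

Lemma card_range n a b : b <= n ->
  #|[set k : 'I_n | (a <= k) && (k < b)]| = b - a.
Proof.
move=> Hb.
have -> : b - a = count (fun k => (a <= k) && (k < b)) (iota 0 n).
  rewrite count_range; lia.
by rewrite cardsE cardE /enum_mem size_filter -val_enum_ord count_map -enumT.
Qed.

Lemma card_lt n b : b <= n -> #|[set k : 'I_n | k < b]| = b.
Proof.
move=> Hb; rewrite -[RHS]subn0 -(@card_range n 0 b Hb).
by apply: eq_card => k; rewrite !inE.
Qed.

Theorem lemma4 (n f tau t : nat) :
  f < tau -> t <= n - f -> t < tau + f -> ~ strong_accuracy n f tau t.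
Proof.
move=> Hf Ht Htt SA.
pose f' := minn t f.
pose e := @MkExec n [set k : 'I_n | (k < f')]
  (fun _ _ => true)
  (fun p k v => [&& p == 0, v == 0, f' <= k & k < t])
  (fun k => if (f' <= k) && (k < t) then [:: (0,0)] else [::])
  [set k : 'I_n | (k < n - f)]
  (fun k => if k < t then [:: (0,0)] else [::]).
have Hadm : admissible f e.
  split => /=.
  - rewrite /= card_lt; lia.
  - rewrite /= card_lt; lia.
  - by [].
  - move=> k p v; rewrite inE /= => Hk.
    case: ifP => H; rewrite ?inE /=.
      by rewrite xpair_eqE ?andbT.
    by rewrite ?andbF.
  - move=> k; rewrite inE /= => Hk.
    have -> : (f' <= k) by lia.
    by [].
have := SA e Hadm 0 0.
have -> : providing_set e 0 0 = [set k : 'I_n | (f' <= k) && (k < t)].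
  by apply/setP => k; rewrite !inE.
rewrite card_range; last lia.
have -> : evidence t e 0 0.
  rewrite /evidence.
  have -> : [set k in quorum e | (0, 0) \in reported e k] =
            [set k : 'I_n | (k < t)].
    apply/setP => k; rewrite !inE /=.
    case: ifP => H; rewrite ?inE ?eqxx ?in_nil ?andbT ?andbF //; lia.
  rewrite card_lt; lia.
move=> H; suff: t - f' < tau by move/H.
rewrite /f'; lia.
Qed.
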